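(* Let $\mathcal{R}$ be a left-linear TRS, $M$ the set automaton constructed from $\mathcal{R}$, $t_0$ a ground term and $\mathit{select}$ a strategy. If $\textsc{Normalize}(t_0,\mathit{select})$ returns a term $t$, then $t$ is a normal form of $t_0$, i.e. $t_0\to^* t$ and $t$ has no redexes.
   Context: Terms: $\mathbb{F}$ finite ranked alphabet with arity $\#$, $\mathbb{V}$ variables. Positions are finite lists of positive integers; $\epsilon$ empty, $p.q$ concatenation. $\mathcal{D}(t)$ positions of $t$, $\mathcal{E}(t)$ variable positions, $t|_p$ subterm, $t[u]_p$ replacement, $\mathrm{hd}(t)$ head symbol. A TRS $\mathcal{R}$ is a finite nonempty set of rules $\ell\to r$ ($\ell\notin\mathbb{V}$, $\mathrm{vars}(r)\subseteq\mathrm{vars}(\ell)$), with left-hand sides $\mathcal{L}$; left-linear means no variable occurs twice in any left-hand side. A redex of $t$ is $(\ell\to r)@p$ with $\ell\to r\in\mathcal{R}$ and $t|_p=\ell^\sigma$ for some $\sigma$; $t[(\ell\to r)@p]$ denotes $t[r^\sigma]_p$; $\to$ is one-step rewriting, $\to^*$ its reflexive-transitive closure; a normal form has no redexes. Set automaton construction. $\mathrm{sub}(\mathcal{L})$: subterms $\ell|_q$, $\ell\in\mathcal{L}$, $q\in\mathcal{D}(\ell)\setminus\mathcal{E}(\ell)$. A match goal $\ell_1@p_1,\dots,\ell_n@p_n\hookrightarrow\ell@p$ ($n\ge1$) has nonempty obligation $mo=\{\ell_i@p_i\}$ ($\ell_i\in\mathrm{sub}(\mathcal{L})$) and announcement $\ell@p$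 ($\ell\in\mathcal{L}$); $\mathrm{pos}(mo)=\{p_i\}$. States are nonempty sets of goals; $s_0=\{\ell@\epsilon\hookrightarrow\ell@\epsilon\mid\ell\in\mathcal{L}\}$; $S$ = states reachable from $s_0$. Each state $s$ has a fixed label $L(s)\in\mathrm{pos}(mo)$ for some goal $mo\hookrightarrow\ell@\epsilon\in s$. $\mathrm{reduce}(mo,f,p)=\{\ell'@q\in mo\mid q\ne p\}\cup\{\ell'|_i@p.i\mid\ell'@p\in mo,1\le i\le\#f,\ell'|_i\notin\mathbb{V}\}$. $\mathrm{deriv}(s,f)$ is the union of $\{\mathrm{reduce}(mo,f,L(s))\hookrightarrow ma\mid mo\hookrightarrow ma\in s,\exists\ell'.\ell'@L(s)\in mo\wedge\mathrm{hd}(\ell')=f,\mathrm{reduce}(mo,f,L(s))\ne\emptyset\}$, $\{mo\hookrightarrow ma\in s\mid L(s)\notin\mathrm{pos}(mo)\}$ and $\{\ell@L(s).i\hookrightarrow\ell@L(s).i\mid\ell\in\mathcal{L},1\le i\le\#f\}$. Goals are directly dependent if their obligation positions intersect; dependency is its transitive closure. For a dependency class $K$ of $\mathrm{deriv}(s,f)$, $\mathrm{gcp}(K)$ is the greatest common prefix of its announcement positions and $\mathrm{lift}(K)$ removes that prefix from all positions in $K$. $\delta(s,f)=\{(\mathrm{lift}(K),\mathrm{gcp}(K))\mid K\}$; $\mathit{out}(s,f)=\{(\ell\to r)@p\mid\ell\to r\in\mathcal{R},f(x_1,\dots,x_{\#f})@L(s)\hookrightarrow\ell@p\in s,x_i\in\mathbb{V}\}$.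 Configuration trees: $ct::=\mathit{bud}(s,p)\mid\mathit{node}(s,p,cts)$, $cts$ a finite possibly empty set of configuration trees; $\mathit{buds}(ct)$, $\mathit{nodes}(ct)$ are the configurations labelling bud/node vertices. $\mathit{grow}(ct,s,p,t)$ replaces every $\mathit{bud}(s,p)$ in $ct$ by $\mathit{node}(s,p,\{\mathit{bud}(s',p.p')\mid(s',p')\in\delta(s,\mathrm{hd}(t|_{p.L(s)}))\})$. $\mathit{prune}(\mathit{bud}(s,p),q)=\mathit{bud}(s,p)$; $\mathit{prune}(\mathit{node}(s,p,cts),q)=\mathit{bud}(s,p)$ if $p.L(s)=q$, else $\mathit{node}(s,p,\{\mathit{prune}(c,q)\mid c\in cts\})$. $ct[p]$ is the subtree of $ct$ whose root configuration $(s,q)$ has $q.L(s)=p$. $\mathit{matches}(s,p,t)=\{(\ell\to r)@p.q\mid(\ell\to r)@q\in\mathit{out}(s,\mathrm{hd}(t|_{p.L(s)}))\}$. Strategy: a partial function $\mathit{select}$ mapping $(ct,reds)$ with $\mathit{buds}(ct)\cup reds\neq\emptyset$ to an element of $\mathit{buds}(ct)\cup reds$. Procedure $\textsc{Normalize}(t_0,\mathit{select})$: set $t:=t_0$, $reds:=\emptyset$, $ct:=\mathit{bud}(s_0,\epsilon)$. While $\mathit{buds}(ct)\ne\emptyset$ or $reds\ne\emptyset$: let $a=\mathit{select}(ct,reds)$. If $a$ is a configuration $(s,p)$: $ct:=\mathit{grow}(ct,s,p,t)$, then $reds:=reds\cup\mathit{matches}(s,p,t)$. If $a$ is a redex $(\ell\to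 r)@p\in reds$: $reds:=reds\setminus\bigcup\{\mathit{matches}(s,q,t)\mid(s,q)\in\mathit{nodes}(ct[p])\}$, then $ct:=\mathit{prune}(ct,p)$, then $t:=t[(\ell\to r)@p]$. After the loop, return $t$. *)

(* Defs.v *)
From HB Require Import structures.
From mathcomp Require Import ssreflect ssrfun ssrbool eqtype ssrnat seq choice.
From mathcomp Require Import fintype fingraph finmap.
From Stdlib Require Import Relation_Operators.
From Stdlib Require List.
Set Implicit Arguments. Unset Strict Implicit. Unset Printing Implicit Defensive.
Local Open Scope fset_scope.

Section Terms.
Variables (F : finType) (V : countType).

Inductive term := Var of V | App of F & seq term.

Fixpoint term_enc (t : term) : GenTree.tree (V + F) := match t with
 | Var x => GenTree.Leaf (inl x)
 | App f ts => GenTree.Node 0 (GenTree.Leaf (inr f) :: map term_enc ts) end.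
Fixpoint term_dec (u : GenTree.tree (V + F)) : option term := match u with
 | GenTree.Leaf (inl x) => Some (Var x)
 | GenTree.Node _ (GenTree.Leaf (inr f) :: us) => Some (App f (pmap term_dec us))
 | _ => None end.
Lemma term_encK : forall t, term_dec (term_enc t) = Some t.
Proof.
fix IH 1 => -[x|f ts] //=. congr (Some (App f _)).
elim: ts => //= u us IHus. by rewrite IH IHus.
Qed.
End Terms.

HB.instance Definition _ (F : finType) (V : countType) :=
  Countable.copy (term F V) (pcan_type (@term_encK F V : pcancel _ _)).

(* Positions: finite lists of positive integers; [::] is epsilon,
   p ++ q is concatenation p.q.  Child indices are 1-based. *)
Definition pos := seq nat.

Section TRS.
Variables (F : finType) (V : countType) (arity : F -> nat).
Notation term := (term F V).

Fixpoint subterm (t : term) (p : pos) : option term := match p with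
 | [::] => Some t
 | i :: q => match t with
   | Var _ => None
   | App f ts => if (0 < i) && (i <= size ts) then subterm (nth t ts i.-1) q else None
   end end.

(* t[u]_p (t unchanged when p is not a position of t) *)
Fixpoint replace (t : term) (p : pos) (u : term) : term := match p with
 | [::] => u
 | i :: q => match t with
   | Var _ => t
   | App f ts => if (0 < i) && (i <= size ts)
                 then App f (set_nth t ts i.-1 (replace (nth t ts i.-1) q u))
                 else t
   end end.

Definition hd (t : term) : option F := if t is App f _ then Some f else None.

Fixpoint subst (sigma : V -> term) (t : term) : term := match t with
 | Var x => sigma x
 | App f ts => App f (map (subst sigma) ts) end.

Fixpoint vars (t : term) : seq V := match t with
 | Var x => [:: x]
 | App _ ts => flatten (map vars ts) end.

Fixpoint wf (t : term) : bool := match t with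
 | Var _ => true
 | App f ts => (size ts == arity f) && all wf ts end.

Definition ground (t : term) : bool := vars t == [::].

Definition is_var (t : term) : bool := if t is Var _ then true else false.

Definition rule := (term * term)%type.
Definition redex := (rule * pos)%type.

Definition is_trs (R : {fset rule}) : Prop :=
  R != fset0 /\
  forall rl, rl \in R ->
    [/\ ~~ is_var rl.1, wf rl.1, wf rl.2 & {subset vars rl.2 <= vars rl.1}].

Definition left_linear (R : {fset rule}) : Prop :=
  forall rl, rl \in R -> uniq (vars rl.1).

Definition rstep (R : {fset rule}) (t t' : term) : Prop :=
  exists (rl : rule) (p : pos) (sigma : V -> term),
    [/\ rl \in R, subterm t p = Some (subst sigma rl.1)
      & t' = replace t p (subst sigma rl.2)].

Definition is_redex (R : {fset rule}) (t : term) (rd : redex) : Prop :=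
  rd.1 \in R /\ exists sigma : V -> term, subterm t rd.2 = Some (subst sigma rd.1.1).

Definition normal_form (R : {fset rule}) (t : term) : Prop :=
  forall rd : redex, ~ is_redex R t rd.

(* a match obligation is a set of l@p, a match goal is  mo ~> l@p *)
Definition obl := {fset (term * pos)}.
Definition goal := (obl * (term * pos))%type.
Definition state := {fset goal}.

Definition lhss (R : {fset rule}) : {fset term} := [fset rl.1 | rl in R].

Definition s0 (R : {fset rule}) : state :=
  [fset ([fset (l, [::])], (l, [::])) | l in lhss R].

Definition posm (mo : obl) : {fset pos} := [fset x.2 | x in mo].

Definition reduce (mo : obl) (f : F) (p : pos) : obl :=
  [fset x in mo | x.2 != p] `|`
  [fset y | y in
     flatten [seq flatten [seq (if x.2 == p then
                                  match subterm x.1 [:: i] with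
                                  | Some u => if is_var u then [::] else [:: (u, p ++ [:: i])]
                                  | None => [::] end
                                else [::]) | i <- iota 1 (arity f)]
             | x <- enum_fset mo]].

Section Automaton.
Variables (lab : state -> pos) (R : {fset rule}).

Definition deriv (s : state) (f : F) : {fset goal} :=
  [fset (reduce g.1 f (lab s), g.2) | g in s &
      has (fun x => (x.2 == lab s) && (hd x.1 == Some f)) (enum_fset g.1)
      && (reduce g.1 f (lab s) != fset0)]
  `|` [fset g in s | lab s \notin posm g.1]
  `|` [fset y | y in [seq ([fset (l, lab s ++ [:: i])], (l, lab s ++ [:: i]))
                     | l <- enum_fset (lhss R), i <- iota 1 (arity f)]].

Definition ddep (g g' : goal) : bool := posm g.1 `&` posm g'.1 != fset0.

Definition dclass (D : {fset goal}) (x : D) : {fset goal} :=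
  [fsetval y in {: D} | connect (fun a b : D => ddep (val a) (val b)) x y].

Definition dclasses (D : {fset goal}) : {fset {fset goal}} :=
  [fset dclass x | x in {: D}].

Fixpoint lcp (p q : pos) : pos := match p, q with
 | i :: p', j :: q' => if i == j then i :: lcp p' q' else [::]
 | _, _ => [::] end.

Definition gcp (K : {fset goal}) : pos :=
  match [seq g.2.2 | g <- enum_fset K] with
  | [::] => [::]
  | p :: ps => foldl lcp p ps end.

Definition liftK (K : {fset goal}) : state :=
  let n := size (gcp K) in
  [fset ([fset (x.1, drop n x.2) | x in (g : goal).1], (g.2.1, drop n g.2.2)) | g in K].

Definition delta (s : state) (f : F) : {fset (state * pos)} :=
  [fset (liftK K, gcp K) | K in dclasses (deriv s f)].

Definition flat (f : F) (u : term) : bool :=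
  if u is App g us then (g == f) && (size us == arity f) && all is_var us else false.

Definition out (s : state) (f : F) : {fset redex} :=
  [fset y | y in [seq (rl, g.2.2) | rl <- enum_fset R,
      g <- [seq g <- enum_fset s | (g.2.1 == rl.1) &&
        has (fun x => (g.1 == [fset x]) && (x.2 == lab s) && flat f x.1)
            (enum_fset g.1)]]].

Inductive reachable : state -> Prop :=
 | reach0 : reachable (s0 R)
 | reachS s f s' p' : reachable s -> (s', p') \in delta s f -> reachable s'.

Definition label_ok : Prop :=
  forall s, reachable s ->
    exists2 g, g \in s & (g.2.2 == [::]) && (lab s \in posm g.1).

(* The children of a node are a finite set; they are represented by a
   list, and strategies are required to be insensitive to the order /
   repetitions of that list (see [cteq] and [is_strategy]). *)
Inductive ctree := Bud of state & pos | Node of state & pos & seq ctree.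

Fixpoint buds_seq (c : ctree) : seq (state * pos) := match c with
 | Bud s p => [:: (s, p)]
 | Node _ _ cs => flatten (map buds_seq cs) end.
Fixpoint nodes_seq (c : ctree) : seq (state * pos) := match c with
 | Bud _ _ => [::]
 | Node s p cs => (s, p) :: flatten (map nodes_seq cs) end.
Definition buds (c : ctree) : {fset (state * pos)} := [fset x | x in buds_seq c].
Definition nodes (c : ctree) : {fset (state * pos)} := [fset x | x in nodes_seq c].

(* the same configuration tree, children read as sets *)
Inductive cteq : ctree -> ctree -> Prop :=
 | cteq_bud s p : cteq (Bud s p) (Bud s p)
 | cteq_node s p cs1 cs2 :
     (forall c1, List.In c1 cs1 -> exists c2, List.In c2 cs2 /\ cteq c1 c2) ->
     (forall c2, List.In c2 cs2 -> exists c1, List.In c1 cs1 /\ cteq c1 c2) ->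
     cteq (Node s p cs1) (Node s p cs2).

(* grow(ct, s, p, t) where f = hd(t|_{p.L(s)}) *)
Fixpoint grow (s : state) (p : pos) (f : F) (c : ctree) : ctree := match c with
 | Bud s' p' => if (s' == s) && (p' == p)
                then Node s p [seq Bud x.1 (p ++ x.2) | x <- enum_fset (delta s f)]
                else c
 | Node s' p' cs => Node s' p' (map (grow s p f) cs) end.

Fixpoint prune (q : pos) (c : ctree) : ctree := match c with
 | Bud _ _ => c
 | Node s p cs => if p ++ lab s == q then Bud s p else Node s p (map (prune q) cs) end.

Fixpoint subtrees_at (p : pos) (c : ctree) : seq ctree := match c with
 | Bud s q => if q ++ lab s == p then [:: c] else [::]
 | Node s q cs => (if q ++ lab s == p then [:: c] else [::])
                  ++ flatten (map (subtrees_at p) cs) end.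

Definition nodes_at (p : pos) (c : ctree) : {fset (state * pos)} :=
  [fset x | x in flatten [seq nodes_seq c' | c' <- subtrees_at p c]].

Definition matches (s : state) (p : pos) (t : term) : {fset redex} :=
  match obind hd (subterm t (p ++ lab s)) with
  | Some f => [fset (x.1, p ++ x.2) | x in out s f]
  | None => fset0 end.

Inductive action := AConf of state & pos | ARed of redex.

Definition act_in (c : ctree) (reds : {fset redex}) (a : action) : bool :=
  match a with
  | AConf s p => (s, p) \in buds c
  | ARed rd => rd \in reds end.

(* select : partial function (None = undefined) returning an element of
   buds(ct) U reds; it only depends on ct as a tree with sets of children *)
Definition is_strategy (select : ctree -> {fset redex} -> option action) : Prop :=
  (forall c reds a, select c reds = Some a -> act_in c reds a) /\
  (forall c1 c2 reds, cteq c1 c2 -> select c1 reds = select c2 reds).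

Definition mstate := (term * {fset redex} * ctree)%type.

Inductive nstep (select : ctree -> {fset redex} -> option action) :
    mstate -> mstate -> Prop :=
 | nstep_grow t reds c s p f args :
     (buds c != fset0) || (reds != fset0) ->
     select c reds = Some (AConf s p) ->
     subterm t (p ++ lab s) = Some (App f args) ->
     nstep select (t, reds, c) (t, reds `|` matches s p t, grow s p f c)
 | nstep_red t reds c l r p (sigma : V -> term) :
     (buds c != fset0) || (reds != fset0) ->
     select c reds = Some (ARed ((l, r), p)) ->
     subterm t p = Some (subst sigma l) ->
     nstep select (t, reds, c)
       (replace t p (subst sigma r),
        reds `\` \bigcup_(x <- enum_fset (nodes_at p c)) matches x.1 x.2 t,
        prune p c).

Definition normalize_returns (select : ctree -> {fset redex} -> option action)
    (t0 t : term) : Prop :=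
  exists (reds : {fset redex}) (c : ctree),
    [/\ clos_refl_trans mstate (nstep select) (t0, fset0, Bud (s0 R) [::]) (t, reds, c),
        buds c = fset0 & reds = fset0].

End Automaton.
End TRS.

(* Main.v *)
Require Import Defs.
From HB Require Import structures.
From mathcomp Require Import ssreflect ssrfun ssrbool eqtype ssrnat seq choice.
From mathcomp Require Import fintype fingraph finmap.
From Stdlib Require Import Relation_Operators Operators_Properties.
Set Implicit Arguments. Unset Strict Implicit. Unset Printing Implicit Defensive.
Local Open Scope fset_scope.

Lemma in_In (T : eqType) (x : T) s : x \in s -> List.In x s.
Proof. elim: s => //= y s IH; rewrite inE => /orP[/eqP->|/IH]; by [left|right]. Qed.

Section TermLemmas.
Variables (F : finType) (V : countType) (arity : F -> nat).
Notation term := (term F V).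
Notation wf := (wf arity).

Definition term_ind' (P : term -> Prop) (HV : forall x, P (Var _ x))
  (HA : forall f ts, List.Forall P ts -> P (App f ts)) : forall t, P t :=
  fix IH t := match t with
  | Var x => HV x
  | App f ts => HA f ts ((fix G (l : seq term) : List.Forall P l :=
      match l with [::] => List.Forall_nil P | u :: l' => List.Forall_cons u (IH u) (G l') end) ts)
  end.

Lemma ForallP (P : term -> Prop) ts : List.Forall P ts -> forall t, t \in ts -> P t.
Proof. move=> H t /in_In; move: t; exact/List.Forall_forall. Qed.

Definition headAt (t : term) (y : pos) : option F := obind (@hd F V) (subterm t y).

Lemma subterm_cat (t : term) p q :
  subterm t (p ++ q) = obind (fun u => subterm u q) (subterm t p).
Proof.
elim: p t => [|i p IH] [x|f ts] //=; case: ifP => // _; exact: IH.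
Qed.

Lemma subterm_subst (sigma : V -> term) l c u :
  subterm l c = Some u -> subterm (subst sigma l) c = Some (subst sigma u).
Proof.
elim: c l => [|i c IH] l; first by case=> <-.
case: l => [x|f ls] //=; rewrite size_map; case: ifP => // /andP[i0 ile] H.
have ilt : i.-1 < size ls by rewrite prednK.
by rewrite (nth_map (App f ls)) // IH.
Qed.

Lemma subterm_wf (t : term) c u : wf t -> subterm t c = Some u -> wf u.
Proof.
elim: c t => [|i c IH] t; first by move=> ? [<-].
case: t => [x|f ts] //= /andP[_ /allP Hall]; case: ifP => // /andP[i0 ile].
apply: IH; apply: Hall; apply: mem_nth; by rewrite prednK.
Qed.

Lemma replace_head (t : term) p u y :
  subterm t p <> None -> ~~ prefix p y -> headAt (replace t p u) y = headAt t y.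
Proof.
rewrite /headAt.
elim: p t y => [|i p IH] t y; first by rewrite prefix0s.
case: t => [x|f ts] //=; case: ifP => // /andP[i0 ile] Hs.
case: y => [|j y] //=.
rewrite size_set_nth (prednK i0) (maxn_idPr ile); case: ifP => // /andP[j0 jle].
have ilt : i.-1 < size ts by rewrite prednK.
have jlt : j.-1 < size ts by rewrite prednK.
rewrite (set_nth_default (App f ts)); last by rewrite size_set_nth (prednK i0) (maxn_idPr ile).
rewrite nth_set_nth /=; have [->|Nij] := eqVneq j i.
- rewrite !eqxx /= => Hp; exact: IH.
- have -> : (j.-1 == i.-1) = false.
    apply/negP => /eqP E; move/negP: Nij; apply; apply/eqP.
    by rewrite -(prednK i0) -(prednK j0) E.
  by [].
Qed.

Lemma wf_replace (t : term) p u : wf t -> wf u -> wf (replace t p u).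
Proof.
elim: p t => [|i p IH] t //; case: t => [x|f ts] //= /andP[/eqP Hs /allP Hall] Hu.
case: ifP => [/andP[i0 ile]|_] /=; last by rewrite Hs eqxx; exact/allP.
have ilt : i.-1 < size ts by rewrite prednK.
rewrite size_set_nth (prednK i0) (maxn_idPr ile) Hs eqxx /=.
apply/allP => v /(nthP (App f ts)) [k]; rewrite size_set_nth (prednK i0) (maxn_idPr ile) => kl <-.
rewrite nth_set_nth /=; case: eqP => _.
- apply: IH => //; apply: Hall; exact: mem_nth.
- apply: Hall; exact: mem_nth.
Qed.

Lemma subst_ext (s1 s2 : V -> term) l :
  (forall x, x \in vars l -> s1 x = s2 x) -> subst s1 l = subst s2 l.
Proof.
elim/term_ind': l => [x|f ls IH] H /=; first by apply: H; rewrite inE.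
congr App; apply/eq_in_map => v vin; apply: (ForallP IH) => // x xin.
apply: H => /=; apply/flatten_mapP; by exists v.
Qed.

Lemma wf_subst_inv (sigma : V -> term) l x :
  wf (subst sigma l) -> x \in vars l -> wf (sigma x).
Proof.
elim/term_ind': l => [y|f ls IH] /=; first by move=> ?; rewrite inE => /eqP->.
move=> /andP[_ /allP Hall] /flatten_mapP [v vin xin].
exact: (ForallP IH vin (Hall _ (map_f _ vin)) xin).
Qed.

Lemma wf_subst (sigma : V -> term) r :
  wf r -> (forall x, x \in vars r -> wf (sigma x)) -> wf (subst sigma r).
Proof.
elim/term_ind': r => [y|f ls IH] /=; first by move=> _ H; apply: H; rewrite inE.
move=> /andP[/eqP Hs /allP Hall] H; rewrite size_map Hs eqxx /=.
apply/allP => w /mapP [v vin ->]; apply: (ForallP IH) => //; first exact: Hall.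
move=> x xin; apply: H; apply/flatten_mapP; by exists v.
Qed.

Lemma uniq_flatten_nth (ls : seq term) d k :
  uniq (flatten (map (@vars F V) ls)) -> k < size ls -> uniq (vars (nth d ls k)).
Proof.
elim: ls k => [|l ls IH] [|k] //=; rewrite cat_uniq => /and3P[U1 _ U2] //.
exact: IH.
Qed.

Lemma combine_match (ls ts : seq term) d :
  size ls = size ts -> uniq (flatten (map (@vars F V) ls)) ->
  (forall k, k < size ls -> exists sigma, nth d ts k = subst sigma (nth d ls k)) ->
  exists sigma, ts = map (subst sigma) ls.
Proof.
elim: ls ts => [|l ls IH] [|t ts] //=.
case=> Hs; rewrite cat_uniq => /and3P[U1 Hn U2] H.
have [s1 E1] := H 0 erefl; rewrite /= in E1.
have [s2 E2] : exists sigma, ts = map (subst sigma) ls.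
  apply: IH => // k kl; exact: (H k.+1).
exists (fun x => if x \in vars l then s1 x else s2 x); congr cons.
- rewrite E1; apply: subst_ext => x ->; by [].
- rewrite E2; apply/eq_in_map => v vin; apply: subst_ext => x xin.
  case: ifP => // xl; have xf : x \in flatten (map (@vars F V) ls) by apply/flatten_mapP; exists v.
  by move/hasPn: Hn => /(_ x xf); rewrite xl.
Qed.

Lemma match_lin (l t : term) :
  uniq (vars l) -> wf l -> wf t ->
  (forall c u, subterm l c = Some u -> ~~ is_var u -> headAt t c = hd u) ->
  exists sigma, t = subst sigma l.
Proof.
elim/term_ind': l t => [x|f ls IH] t; first by move=> *; exists (fun _ => t).
move=> /= U /andP[/eqP Hs /allP Hall] Wt H.
have := H [::] _ erefl isT; rewrite /headAt /=.
case: t Wt H => [y|g ts] //= /andP[/eqP Ht /allP Hallt] H [Eg]; subst g.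
have [sigma ->] : exists sigma, ts = map (subst sigma) ls; last by exists sigma.
apply: (combine_match (d := App f ls)) => //; first by rewrite Hs Ht.
move=> k kl; apply: (ForallP IH); first exact: mem_nth.
- exact: uniq_flatten_nth.
- apply: Hall; exact: mem_nth.
- apply: Hallt; apply: mem_nth; by rewrite Ht -Hs.
have kt : k < size ts by rewrite Ht -Hs.
move=> c u Hc Hu; have := H (k.+1 :: c) u; rewrite /= kl Hc => /(_ erefl Hu).
by rewrite /headAt /= kt (set_nth_default (App f ls) (App f ts)).
Qed.

End TermLemmas.

Section Auto.
Variables (F : finType) (V : countType) (arity : F -> nat).
Variables (lab : state F V -> pos) (R : {fset rule F V}).
Notation term := (term F V).
Notation goal := (goal F V).
Notation state := (state F V).
Notation obl := (obl F V).

Lemma in_fset_seq (K : choiceType) (s : seq K) x : (x \in [fset y | y in s]) = (x \in s).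
Proof. by rewrite in_fset. Qed.
Lemma in_fset_sep (K : choiceType) (A : {fset K}) (P : pred K) x :
  (x \in [fset y in A | P y]) = (x \in A) && P x.
Proof. by rewrite !inE. Qed.

Lemma in_lhss l : reflect (exists2 rl, rl \in R & l = rl.1) (l \in lhss R).
Proof. exact: imfsetP. Qed.

Lemma in_reduce (mo : obl) f p x :
  x \in reduce arity mo f p <->
  (x \in mo /\ x.2 != p) \/
  exists y u i, [/\ y \in mo, y.2 = p, i \in iota 1 (arity f), subterm y.1 [:: i] = Some u &
                  ~~ is_var u /\ x = (u, p ++ [:: i])].
Proof.
rewrite /reduce in_fsetU in_fset_sep in_fset_seq; split.
- case/orP => [/andP[? ?]|]; first by left.
  case/flatten_mapP => y yin /flatten_mapP [i iin]; case: eqP => // yp.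
  case Hs: subterm => [u|] //; case: ifP => // uv; rewrite inE => /eqP ->.
  right; exists y, u, i; split => //; by rewrite uv.
- case => [[-> ->] //|[y [u [i [yin yp iin Hs [uv ->]]]]]].
  apply/orP; right; apply/flatten_mapP; exists y => //; apply/flatten_mapP; exists i => //.
  by rewrite yp eqxx Hs (negbTE uv) inE.
Qed.

Lemma in_posm (mo : obl) b : reflect (exists u, (u, b) \in mo) (b \in posm mo).
Proof.
apply: (iffP idP) => [/imfsetP [[u b'] xin /= ->]|[u H]]; first by exists u.
by apply/imfsetP; exists (u, b).
Qed.

Definition fresh (l : term) (b : pos) : goal := ([fset (l, b)], (l, b)).

Lemma in_deriv s f h : h \in deriv arity lab R s f <->
  (exists2 g, g \in s & [/\ has (fun x => (x.2 == lab s) && (hd x.1 == Some f)) (enum_fset g.1),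
      reduce arity g.1 f (lab s) != fset0 & h = (reduce arity g.1 f (lab s), g.2)])
  \/ (h \in s /\ lab s \notin posm h.1)
  \/ (exists l i, [/\ l \in lhss R, i \in iota 1 (arity f) & h = fresh l (lab s ++ [:: i])]).
Proof.
rewrite /deriv !in_fsetU in_fset_sep in_fset_seq; split.
- case/orP => [/orP[|]|].
  + case/imfsetP => g /=; rewrite inE => /andP[gin /andP[H1 H2]] ->.
    left; exists g => //.
  + by move=> /andP[? ?]; right; left.
  + case/allpairsP => [[l i] [/= lin iin ->]]; right; right; by exists l, i.
- case => [[g gin [H1 H2 ->]]|[[-> ->]|[l [i [lin iin ->]]]]].
  + apply/orP; left; apply/orP; left; apply/imfsetP; exists g => //=.
    by rewrite inE gin H1 H2.
  + by rewrite orbT.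
  + apply/orP; right; apply/allpairsP; by exists (l, i).
Qed.


Definition GS (g : goal) : Prop :=
  [/\ g.2.1 \in lhss R, g.1 != fset0 &
      forall x, x \in g.1 -> exists c, [/\ x.2 = g.2.2 ++ c, subterm g.2.1 c = Some x.1 & ~~ is_var x.1]].

Definition SI (s : state) : Prop :=
  (forall g, g \in s -> GS g) /\
  (forall g x l, g \in s -> x \in g.1 -> l \in lhss R -> fresh l x.2 \in s).

Lemma GS_uniq g x y : GS g -> x \in g.1 -> y \in g.1 -> x.2 = y.2 -> x = y.
Proof.
case=> _ _ H /H [c [Ex Sx _]] /H [c' [Ey Sy _]].
rewrite Ex Ey => /eqP; rewrite eqseq_cat // eqxx /= => /eqP Ec; subst c'.
move: Sx; rewrite Sy => -[Ex1]; apply/eqP; rewrite (surjective_pairing x) (surjective_pairing y).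
by rewrite Ex Ey Ex1.
Qed.

Lemma lhs_props l : is_trs arity R -> l \in lhss R -> ~~ is_var l /\ wf arity l.
Proof. by case=> _ H /in_lhss [rl /H [? ? ? ?] ->]. Qed.

Lemma GS_fresh l b : is_trs arity R -> l \in lhss R -> GS (fresh l b).
Proof.
move=> Htrs lin; split => //=; first by apply/eqP => /fsetP /(_ (l, b)); rewrite !inE eqxx.
move=> x; rewrite inE => /eqP ->; exists [::]; rewrite cats0; split => //.
by case: (lhs_props Htrs lin).
Qed.

Lemma in_fresh1 l b x : x \in (fresh l b).1 -> x = (l, b).
Proof. by rewrite inE => /eqP. Qed.

Lemma posm_fresh l b p : (p \in posm (fresh l b).1) = (p == b).
Proof.
apply/in_posm/eqP => [[u /in_fresh1 [_ ->]] //|->]; exists l; by rewrite inE.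
Qed.

Lemma deriv_GS s f h : is_trs arity R -> SI s -> h \in deriv arity lab R s f -> GS h.
Proof.
move=> Htrs [Hs _] /in_deriv [[g gin [_ Hne ->]]|[[hin _]|[l [i [lin _ ->]]]]];
  [|exact: Hs | exact: GS_fresh].
have [G1 G2 G3] := Hs _ gin; split => // x /in_reduce [[xin _]|[y [u [i [yin yp iin Hsub [uv ->]]]]]].
- exact: G3.
- have [c [E1 E2 E3]] := G3 _ yin; exists (c ++ [:: i]); split => //=.
  + by rewrite -yp E1 catA.
  + by rewrite subterm_cat E2.
Qed.

Lemma deriv_CL s f h x l : SI s -> h \in deriv arity lab R s f -> x \in h.1 -> l \in lhss R ->
  fresh l x.2 \in deriv arity lab R s f.
Proof.
move=> [Hs Hc] /in_deriv [[g gin [_ Hne ->]]|[[hin Hlab]|[l' [i [lin iin ->]]]]] xin Hl.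
- case/in_reduce: xin => [[xin Hx]|[y [u [i [yin yp iin Hsub [uv ->]]]]]].
  + apply/in_deriv; right; left; split; first exact: (Hc g).
    by rewrite posm_fresh eq_sym.
  + apply/in_deriv; right; right; exists l, i; by rewrite -yp.
- apply/in_deriv; right; left; split; first exact: (Hc h).
  rewrite posm_fresh; apply: contra Hlab => /eqP ->; apply/in_posm; exists x.1.
  by case: x xin.
- move/in_fresh1: xin => -> /=; apply/in_deriv; right; right; by exists l, i.
Qed.


Lemma lcp_prefix (p q : pos) : prefix (lcp p q) p && prefix (lcp p q) q.
Proof.
elim: p q => [|i p IH] [|j q] //=; case: eqP => [->|_] //=.
by rewrite !eqxx /=; case/andP: (IH q) => -> ->.
Qed.

Lemma foldl_lcp_prefix (ps : seq pos) p :
  prefix (foldl lcp p ps) p /\ forall q, q \in ps -> prefix (foldl lcp p ps) q.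
Proof.
elim: ps p => [|q ps IH] p /=; first by rewrite prefix_refl.
have [H1 H2] := IH (lcp p q); have /andP[L1 L2] := lcp_prefix p q; split.
- exact: prefix_trans H1 L1.
- move=> r; rewrite inE => /orP[/eqP->|]; first exact: prefix_trans H1 L2.
  exact: H2.
Qed.

Lemma gcp_prefix (K : {fset goal}) g : g \in K -> prefix (gcp K) g.2.2.
Proof.
rewrite /gcp => gin; have : g.2.2 \in [seq g.2.2 | g <- enum_fset K] by exact: map_f.
case: [seq _ | _ <- _] => [|p ps] //; rewrite inE => /orP[/eqP->|]; have [H1 H2] := foldl_lcp_prefix ps p.
- exact: H1.
- exact: H2.
Qed.

Lemma in_dclass (D : {fset goal}) (x : D) g :
  g \in dclass x <-> exists y : D, g = val y /\ connect (fun a b : D => ddep (val a) (val b)) x y.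
Proof.
rewrite /dclass; split.
- case/imfsetP => y /=; rewrite inE => H ->; exists y; split => //; by case/andP: H.
- case=> y [-> H]; apply/imfsetP; exists y => //; by rewrite inE.
Qed.

Lemma dclasses_sub (D : {fset goal}) K g : K \in dclasses D -> g \in K -> g \in D.
Proof. case/imfsetP => x _ -> /in_dclass [y [-> _]]; exact: valP. Qed.

Lemma dclasses_cover (D : {fset goal}) g : g \in D -> exists2 K, K \in dclasses D & g \in K.
Proof.
move=> gin; exists (dclass [` gin]); first by apply/imfsetP; exists [` gin].
apply/in_dclass; exists [` gin]; by rewrite connect0.
Qed.

Lemma dclasses_closed (D : {fset goal}) K g h :
  K \in dclasses D -> g \in K -> h \in D -> ddep g h -> h \in K.
Proof.
case/imfsetP => x _ -> /in_dclass [y [-> Hc]] hin Hd.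
apply/in_dclass; exists [` hin]; split => //; apply: connect_trans Hc _; exact: connect1.
Qed.


Definition liftg (n : nat) (g : goal) : goal :=
  ([fset (x.1, drop n x.2) | x in g.1], (g.2.1, drop n g.2.2)).

Lemma in_liftK K g' : g' \in Defs.liftK K <-> exists2 g, g \in K & g' = liftg (size (gcp K)) g.
Proof. split; [by case/imfsetP => g gin ->; exists g | by case=> g gin ->; apply/imfsetP; exists g]. Qed.

Lemma in_delta s f y : y \in delta arity lab R s f <->
  exists2 K, K \in dclasses (deriv arity lab R s f) & y = (Defs.liftK K, gcp K).
Proof. split; [by case/imfsetP => K Kin ->; exists K | by case=> K Kin ->; apply/imfsetP; exists K]. Qed.

Lemma prefix_drop (p y : pos) : prefix p y -> p ++ drop (size p) y = y.
Proof. by case/prefixP => r ->; rewrite drop_size_cat. Qed.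

Lemma cat_cancel (p a b : pos) : p ++ a = p ++ b -> a = b.
Proof. by move/(congr1 (drop (size p))); rewrite !drop_size_cat. Qed.

Lemma liftg_fresh n l b : liftg n (fresh l b) = fresh l (drop n b).
Proof.
rewrite /liftg /fresh /=; congr pair; apply/fsetP => z; apply/imfsetP/idP.
- by case=> x /in_fresh1 -> ->; rewrite inE.
- rewrite inE => /eqP ->; exists (l, b) => //; by rewrite inE.
Qed.

Lemma liftg_corr (P0 : pos) h :
  GS h -> prefix P0 h.2.2 ->
  let g' := liftg (size P0) h in
  [/\ g'.2.1 = h.2.1, P0 ++ g'.2.2 = h.2.2,
      (forall x', x' \in g'.1 -> exists2 x, x \in h.1 & x'.1 = x.1 /\ P0 ++ x'.2 = x.2) &
      (forall x, x \in h.1 -> exists2 x', x' \in g'.1 & x'.1 = x.1 /\ P0 ++ x'.2 = x.2)].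
Proof.
move=> [_ _ G3] Hp /=.
have Hx : forall x, x \in h.1 -> P0 ++ drop (size P0) x.2 = x.2.
  move=> x /G3 [c [-> _ _]]; apply: prefix_drop; exact: prefix_catl.
split => //.
- exact: prefix_drop.
- move=> x' /imfsetP [x xin ->]; exists x => //=; split => //; exact: Hx.
- move=> x xin; exists (x.1, drop (size P0) x.2); last by split => //; exact: Hx.
  by apply/imfsetP; exists x.
Qed.

Lemma delta_SI s f y : is_trs arity R -> SI s -> y \in delta arity lab R s f -> SI y.1.
Proof.
move=> Htrs HS /in_delta [K Kin ->] /=.
have Kd : forall h, h \in K -> h \in deriv arity lab R s f by move=> h; exact: dclasses_sub.
have KG : forall h, h \in K -> GS h by move=> h /Kd; exact: deriv_GS.
split.
- move=> g' /in_liftK [h hin ->].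
  have [E1 E2 C1 C2] := liftg_corr (KG _ hin) (gcp_prefix hin).
  have [G1 G2 G3] := KG _ hin.
  split; first by rewrite E1.
  + case/fset0Pn: G2 => x xin; have [x' x'in _] := C2 _ xin; apply/fset0Pn; by exists x'.
  + move=> x' /C1 [x xin [Ex1 Ex2]]; have [c [Ec Sc Vc]] := G3 _ xin.
    exists c; rewrite E1 Ex1; split => //; apply: (@cat_cancel (gcp K)).
    by rewrite Ex2 Ec -E2 catA.
- move=> g' x' l /in_liftK [h hin ->] x'in lin.
  have [E1 E2 C1 C2] := liftg_corr (KG _ hin) (gcp_prefix hin).
  have [x xin [Ex1 Ex2]] := C1 _ x'in.
  have fin : fresh l x.2 \in K.
    apply: (dclasses_closed Kin hin); first exact: (deriv_CL HS (Kd _ hin)).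
    rewrite /ddep; apply/fset0Pn; exists x.2; rewrite in_fsetI posm_fresh eqxx andbT.
    apply/in_posm; exists x.1; by case: (x) xin.
  apply/in_liftK; exists (fresh l x.2) => //; rewrite liftg_fresh -Ex2 drop_size_cat //.
Qed.

Lemma reach_SI s : is_trs arity R -> reachable arity lab R s -> SI s.
Proof.
move=> Htrs; elim => [|s1 f s' p' _ IH Hin].
- split.
  + move=> g /imfsetP [l lin ->]; exact: GS_fresh.
  + move=> g x l /imfsetP [l' lin' ->] /in_fresh1 -> lin /=.
    by apply/imfsetP; exists l.
- exact: (delta_SI (y := (s', p')) Htrs IH Hin).
Qed.

End Auto.

Section Auto2.
Variables (F : finType) (V : countType) (arity : F -> nat).
Variables (lab : state F V -> pos) (R : {fset rule F V}).
Notation term := (term F V).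
Notation goal := (goal F V).
Notation state := (state F V).
Notation obl := (obl F V).
Notation redex := (redex F V).
Notation deriv := (deriv arity lab R).
Notation delta := (delta arity lab R).
Notation out := (out arity lab R).
Notation matches := (matches arity lab R).
Notation GS := (GS R).
Notation SI := (SI R).

Lemma in_out s f rl a : (rl, a) \in out s f <->
  rl \in R /\ exists2 g, g \in s &
    [/\ g.2.1 = rl.1, a = g.2.2 & exists2 y, y \in g.1 & [/\ g.1 = [fset y], y.2 = lab s & flat arity f y.1]].
Proof.
rewrite /out in_fset_seq; split.
- case/allpairsPdep => rl' [g [rlin]]; rewrite mem_filter => /andP[/andP[/eqP E1 /hasP [y yin /andP[/andP[/eqP E2 /eqP E3] E4]]] gin] [E5 E6]; subst rl' a.
  split => //; exists g => //; split => //; by exists y.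
- case=> rlin [g gin [E1 -> [y yin [E2 E3 E4]]]]; apply/allpairsPdep; exists rl, g; split => //.
  rewrite mem_filter gin E1 eqxx andbT /=; apply/hasP; exists y => //.
  by rewrite E2 E3 E4 !eqxx.
Qed.

Lemma in_matches s q t rd : rd \in matches s q t <->
  exists f, headAt t (q ++ lab s) = Some f /\ exists2 ra, ra \in out s f & rd = (ra.1, q ++ ra.2).
Proof.
rewrite /matches /headAt; case: obind => [f|]; last by split => [|[f []]]; rewrite ?inE.
split; first by case/imfsetP => ra rain ->; exists f; split => //; exists ra.
by case=> f' [[<-] [ra rain ->]]; apply/imfsetP; exists ra.
Qed.


Definition gcov (q : pos) (h : goal) (rd : redex) : Prop :=
  (h.2.1 = rd.1.1 /\ q ++ h.2.2 = rd.2) \/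
  exists x i rest, x \in h.1 /\ rd.2 = q ++ x.2 ++ i :: rest.

Definition covers (y : state * pos) (rd : redex) : Prop := exists2 g, g \in y.1 & gcov y.2 g rd.

Lemma child_cov s f q h rd : is_trs arity R -> SI s -> h \in deriv s f -> gcov q h rd ->
  exists2 y, y \in delta s f & covers (y.1, q ++ y.2) rd.
Proof.
move=> Htrs HS hin Hc; have [K Kin hK] := dclasses_cover hin.
exists (Defs.liftK K, gcp K); first by apply/in_delta; exists K.
have HG : GS h := deriv_GS Htrs HS hin.
have [E1 E2 C1 C2] := liftg_corr HG (gcp_prefix hK).
exists (liftg (size (gcp K)) h); first by apply/in_liftK; exists h.
case: Hc => [[H1 H2]|[x [i [rest [xin H]]]]].
- left; by rewrite E1 -catA E2.
- right; have [x' x'in [_ Ex]] := C2 _ xin; exists x', i, rest; split => //.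
  by rewrite H -Ex !catA.
Qed.

Lemma unchild_cov s f q y rd : is_trs arity R -> SI s -> y \in delta s f ->
  covers (y.1, q ++ y.2) rd -> exists2 h, h \in deriv s f & gcov q h rd.
Proof.
move=> Htrs HS /in_delta [K Kin ->] [g' /= /in_liftK [h hK ->] Hc].
have hin : h \in deriv s f := dclasses_sub Kin hK.
have HG : GS h := deriv_GS Htrs HS hin.
have [E1 E2 C1 C2] := liftg_corr HG (gcp_prefix hK).
exists h => //; case: Hc => [[H1 H2]|[x' [i [rest [x'in H]]]]].
- left; by rewrite -E1 -E2 catA.
- right; have [x xin [_ Ex]] := C1 _ x'in; exists x, i, rest; split => //.
  by rewrite H -Ex !catA.
Qed.

Lemma deriv_cov_parent s f q h rd :
  (exists2 g, g \in s & lab s \in posm g.1) -> h \in deriv s f -> gcov q h rd -> covers (s, q) rd.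
Proof.
move=> [g0 g0in /in_posm [u0 u0in]].
have Hlab : forall i rest, rd.2 = q ++ lab s ++ i :: rest -> covers (s, q) rd.
  move=> i rest E; exists g0 => //; right; by exists (u0, lab s), i, rest.
case/in_deriv => [[g gin [Hh Hne ->]]|[[hin _]|[l [i [lin iin ->]]]]] Hc.
- case: Hc => [[H1 H2]|[x [i [rest [/in_reduce xin H]]]]]; first by exists g => //; left.
  case: xin => [[xin _]|[y [u [i' [yin yp iin Hs [uv Ex]]]]]].
  + by exists g => //; right; exists x, i, rest.
  + apply: (Hlab i' (i :: rest)); by rewrite H Ex /= -catA.
- by exists h.
- case: Hc => [[H1 H2]|[x [i' [rest [/in_fresh1 -> H]]]]].
  + apply: (Hlab i [::]); by rewrite -H2.
  + apply: (Hlab i (i' :: rest)); by rewrite H -catA.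
Qed.

Lemma matches_covers s q t rd : rd \in matches s q t -> covers (s, q) rd.
Proof.
case/in_matches => f [_ [[rl a] /in_out [_ [g gin [E1 E2 _]]] ->]].
exists g => //; left; by rewrite E1 E2.
Qed.

Lemma root_covers rd : rd.1 \in R -> covers (s0 R, [::]) rd.
Proof.
move=> rin; exists (fresh rd.1.1 [::]); first by apply/imfsetP; exists rd.1.1 => //; apply/imfsetP; exists rd.1.
case E: rd.2 => [|i rest]; first by left.
right; exists (rd.1.1, [::]), i, rest; split => //; by rewrite inE.
Qed.


Lemma lhss_of rl : rl \in R -> rl.1 \in lhss R.
Proof. by move=> rin; apply/imfsetP; exists rl. Qed.

Lemma local_complete s q t f args rd : is_trs arity R -> SI s -> wf arity t -> is_redex R t rd ->
  covers (s, q) rd -> subterm t (q ++ lab s) = Some (App f args) ->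
  rd \in matches s q t \/ exists2 h, h \in deriv s f & gcov q h rd.
Proof.
case: rd => [[l r] P] Htrs [HG HC] Wt [/= rin [sigma Hsig]] [g /= gin Hcov] Hsub.
have lin : l \in lhss R := lhss_of rin.
case: Hcov => [[/= E1 E2]|[x [i [rest [xin /= EP]]]]].
- case: (boolP (lab s \in posm g.1)) => Hl; last first.
    right; exists g; [apply/in_deriv; right; left; by split | by left].
  case/in_posm: Hl => u uin; have [G1 G2 G3] := HG g gin.
  have [c [/= Ec Sc Vc]] := G3 _ uin.
  have St : subterm t (q ++ lab s) = Some (subst sigma u).
    rewrite Ec catA E2 subterm_cat Hsig /=; apply: subterm_subst; by rewrite -E1.
  case: u uin Ec Sc Vc St => [//|f' us] uin Ec Sc _; rewrite Hsub => -[Ef _]; subst f'.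
  have Hhas : has (fun x => (x.2 == lab s) && (hd x.1 == Some f)) (enum_fset g.1).
    by apply/hasP; exists (App f us, lab s) => //=; rewrite !eqxx.
  case: (boolP (reduce arity g.1 f (lab s) == fset0)) => Hr; last first.
    right; exists (reduce arity g.1 f (lab s), g.2); first by apply/in_deriv; left; exists g.
    by left.
  left; apply/in_matches; exists f; split; first by rewrite /headAt Hsub.
  exists ((l, r), g.2.2); last by rewrite /= E2.
  apply/in_out; split => //; exists g => //; split => //.
  exists (App f us, lab s) => //; split => //.
  + apply/fsetP => z; rewrite inE; apply/idP/eqP => [zin|->//].
    case: (eqVneq z.2 (lab s)) => Hz.
    * exact: (GS_uniq (HG g gin)).
    * have : z \in reduce arity g.1 f (lab s) by apply/in_reduce; left.
      by rewrite (eqP Hr) in_fset0.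
  + have Wl : wf arity l by case: (lhs_props Htrs lin).
    have /= /andP[Hsz _] : wf arity (App f us) by move: Sc; rewrite E1 => /(subterm_wf Wl).
    rewrite /flat /= eqxx Hsz /=; apply/allP => v /(nthP (App f us)) [k kl Ev].
    apply/negPn/negP => nv.
    have : (v, lab s ++ [:: k.+1]) \in reduce arity g.1 f (lab s).
      apply/in_reduce; right; exists (App f us, lab s), v, k.+1; split => //.
      * by rewrite mem_iota add1n ltnS -(eqP Hsz).
      * by rewrite /= kl Ev.
    by rewrite (eqP Hr) in_fset0.
- case: (eqVneq x.2 (lab s)) => Ex.
  + have Hp : subterm t P <> None by rewrite Hsig.
    move: Hp; rewrite EP Ex catA subterm_cat Hsub /=.
    case: ifP => // /andP[i0 ile] _.
    have /= /andP[/eqP Hsz _] : wf arity (App f args) by exact: subterm_wf Wt Hsub.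
    right; exists (fresh l (lab s ++ [:: i])).
      apply/in_deriv; right; right; exists l, i; split => //.
      by rewrite mem_iota add1n ltnS -Hsz ile i0.
    case: rest EP => [|j rest] EP.
    * left; split => //=; by rewrite catA.
    * right; exists (l, lab s ++ [:: i]), j, rest; split; first by rewrite inE.
      by rewrite /= -!catA.
  + right; exists (fresh l x.2).
      apply/in_deriv; right; left; split; first exact: (HC g x l).
      by rewrite posm_fresh eq_sym.
    right; exists (l, x.2), i, rest; split => //; by rewrite inE.
Qed.

End Auto2.

Section Auto3.
Variables (F : finType) (V : countType) (arity : F -> nat).
Variables (lab : state F V -> pos) (R : {fset rule F V}).
Notation term := (term F V).
Notation goal := (goal F V).
Notation state := (state F V).
Notation obl := (obl F V).
Notation redex := (redex F V).
Notation deriv := (deriv arity lab R).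
Notation delta := (delta arity lab R).
Notation out := (out arity lab R).
Notation matches := (matches arity lab R).
Notation GS := (GS R).
Notation SI := (SI R).

Definition DInv (t : term) (A : seq pos) (q : pos) (g : goal) : Prop :=
  (forall x, x \in g.1 -> q ++ x.2 = [::] \/ exists y i, q ++ x.2 = rcons y i /\ y \in A) /\
  (forall c u, subterm g.2.1 c = Some u -> ~~ is_var u ->
    (q ++ g.2.2 ++ c \in A /\ headAt t (q ++ g.2.2 ++ c) = hd u) \/
    exists c1 c2, c = c1 ++ c2 /\ g.2.2 ++ c1 \in posm g.1).

Definition Inv t A (s : state) q : Prop := forall g, g \in s -> DInv t A q g.

Lemma DInv_sub t A B q g : {subset A <= B} -> DInv t A q g -> DInv t B q g.
Proof.
move=> sAB [H1 H2]; split.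
- move=> x /H1 [->|[y [i [E yA]]]]; [by left | right; exists y, i; split => //; exact: sAB].
- move=> c u Hc Hu; case: (H2 c u Hc Hu) => [[H3 H4]|H3]; last by right.
  left; split => //; exact: sAB.
Qed.

Lemma deriv_Inv s q t A f args h : is_trs arity R -> SI s -> Inv t A s q ->
  subterm t (q ++ lab s) = Some (App f args) -> h \in deriv s f ->
  DInv t (rcons A (q ++ lab s)) q h.
Proof.
move=> Htrs [HG HC] HI Hsub.
have sA : {subset A <= rcons A (q ++ lab s)} by move=> z zA; rewrite mem_rcons inE zA orbT.
have xA : q ++ lab s \in rcons A (q ++ lab s) by rewrite mem_rcons inE eqxx.
case/in_deriv => [[g gin [Hh Hne ->]]|[[hin _]|[l [i [lin iin ->]]]]].
- have [H1 H2] := HI g gin; have [G1 G2 G3] := HG g gin; split => /=.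
  + move=> x /in_reduce [[xin _]|[y [u [i [yin yp iin Hs [uv ->]]]]]].
    * have [] := DInv_sub sA (HI g gin); by move/(_ x xin).
    * right; exists (q ++ lab s), i; by rewrite /= catA cats1.
  + move=> c u Hc Hu; case: (H2 c u Hc Hu) => [[H3 H4]|[c1 [c2 [Ec /in_posm [u1 u1in]]]]].
      by left; split => //; exact: sA.
    case: (eqVneq (g.2.2 ++ c1) (lab s)) => Hl; last first.
      right; exists c1, c2; split => //; apply/in_posm; exists u1.
      by apply/in_reduce; left.
    have [c' [/= Ec' Sc' Vc']] := G3 _ u1in; move/cat_cancel: Ec' => Ec'; subst c'.
    case/hasP: Hh => y yin /andP[/eqP yl /eqP yf].
    have Ey : y = (u1, g.2.2 ++ c1) by apply: (GS_uniq (HG g gin)) => //=; rewrite yl.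
    rewrite Ey /= in yf.
    have Wl : wf arity g.2.1 by case: (lhs_props Htrs G1).
    have Wu1 : wf arity u1 := subterm_wf Wl Sc'.
    subst c; move: Hc; rewrite subterm_cat Sc' /=.
    case: c2 => [|i c3].
    * case=> Eu; subst u1; left; rewrite cats0 Hl; split => //; by rewrite /headAt Hsub.
    * case: u1 u1in Sc' Vc' yf Wu1 {Ey} => [//|f' us] u1in Sc' _ [Ef] /= /andP[/eqP Hsz _]; subst f'.
      case: ifP => // /andP[i0 ile].
      set u2 := nth _ us i.-1 => Hc3.
      have Vu2 : ~~ is_var u2.
        by case: (u2) Hc3 Hu => [x|//]; case: c3 => [[<-]|].
      right; exists (c1 ++ [:: i]), c3; split; first by rewrite -catA.
      apply/in_posm; exists u2; apply/in_reduce; right.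
      exists (App f us, lab s), u2, i; split => //.
      -- by rewrite -Hl.
      -- by rewrite mem_iota add1n ltnS -Hsz ile i0.
      -- by rewrite /= i0 ile.
      -- by rewrite -Hl catA.
- exact: DInv_sub sA (HI h hin).
- split => /=.
  + move=> x /in_fresh1 -> /=; right; exists (q ++ lab s), i; by rewrite catA cats1.
  + move=> c u _ _; right; exists [::], c; split => //; by rewrite cats0 posm_fresh.
Qed.


Lemma delta_Inv s q t A f args y : is_trs arity R -> SI s -> Inv t A s q ->
  subterm t (q ++ lab s) = Some (App f args) -> y \in delta s f ->
  Inv t (rcons A (q ++ lab s)) y.1 (q ++ y.2).
Proof.
move=> Htrs HS HI Hsub /in_delta [K Kin ->] g' /= /in_liftK [h hK ->].
have hin : h \in deriv s f := dclasses_sub Kin hK.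
have HG : GS h := deriv_GS Htrs HS hin.
have [E1 E2 C1 C2] := liftg_corr HG (gcp_prefix hK).
have [D1 D2] := deriv_Inv Htrs HS HI Hsub hin.
split.
- move=> x' /C1 [x xin [_ Ex]]; rewrite -catA Ex; exact: D1.
- move=> c u; rewrite E1 => Hc Hu; case: (D2 c u Hc Hu) => [H|[c1 [c2 [Ec Hp]]]].
  + left; by rewrite -catA (catA (gcp K)) E2.
  + right; exists c1, c2; split => //.
    case/in_posm: Hp => u1 u1in; have [x' x'in [Ex1 Ex2]] := C2 _ u1in.
    apply/in_posm; exists x'.1; rewrite /= in Ex2.
    have -> : drop (size (gcp K)) h.2.2 ++ c1 = x'.2.
      apply: (@cat_cancel (gcp K)); rewrite Ex2 catA; congr (_ ++ _); exact: E2.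
    by case: (x') x'in.
Qed.

Lemma flat_hd f (u : term) : flat arity f u -> hd u = Some f.
Proof. by case: u => [//|f' us] /= /andP[/andP[/eqP -> _] _]. Qed.

Lemma sound s q t A rd : is_trs arity R -> SI s -> Inv t A s q -> rd \in matches s q t ->
  rd.1 \in R /\ forall c u, subterm rd.1.1 c = Some u -> ~~ is_var u ->
    rd.2 ++ c \in rcons A (q ++ lab s) /\ headAt t (rd.2 ++ c) = hd u.
Proof.
move=> Htrs [HG _] HI /in_matches [f [Hf [[rl a] /in_out [rin [g gin [E1 -> [y yin [Eg yl Hfl]]]]] ->]]].
split => // c u /= Hc Hu.
have sA : {subset A <= rcons A (q ++ lab s)} by move=> z zA; rewrite mem_rcons inE zA orbT.
have [_ D2] := HI g gin; rewrite -E1 in Hc.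
case: (D2 c u Hc Hu) => [[H1 H2]|[c1 [c2 [Ec /in_posm [u1 u1in]]]]].
  by rewrite -catA; split => //; exact: sA.
have := u1in; rewrite Eg inE => /eqP Ey; subst y.
have [G1 G2 G3] := HG g gin; have [c' [/= Ec' Sc' Vc']] := G3 _ u1in.
move/cat_cancel: Ec' => Ec'; subst c'; rewrite /= in yl.
subst c; move: Hc; rewrite subterm_cat Sc' /=.
case: c2 => [|i c3].
- case=> Eu; subst u1; rewrite cats0 -catA yl; split; first by rewrite mem_rcons inE eqxx.
  by rewrite Hf (flat_hd Hfl).
- case: u1 Hfl {u1in Sc' Vc' Eg yin} => [//|f' us] /= /andP[_ /allP Hv].
  case: ifP => // /andP[i0 ile].
  have : is_var (nth (App f' us) us i.-1) by apply: Hv; apply: mem_nth; rewrite prednK.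
  case: (nth _ _ _) => [x|//] _; case: c3 => [[Eu]|//]; by rewrite -Eu in Hu.
Qed.

Lemma redex_of_heads t rd : is_trs arity R -> left_linear R -> wf arity t -> rd.1 \in R ->
  (forall c u, subterm rd.1.1 c = Some u -> ~~ is_var u -> headAt t (rd.2 ++ c) = hd u) ->
  is_redex R t rd.
Proof.
move=> Htrs Hll Wt rin H; split => //.
have [Vl Wl] := lhs_props Htrs (lhss_of rin).
have := H [::] rd.1.1 erefl Vl; rewrite cats0 /headAt.
case Ht: (subterm t rd.2) => [tp|] /=; last by case: (rd.1.1) Vl.
move=> _.
have Hm : forall c u, subterm rd.1.1 c = Some u -> ~~ is_var u -> headAt tp c = hd u.
  by move=> c u Hc Hu; rewrite -(H c u Hc Hu) /headAt subterm_cat Ht.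
have [sigma E] := match_lin (Hll _ rin) Wl (subterm_wf Wt Ht) Hm.
by exists sigma; rewrite E.
Qed.

End Auto3.

Lemma in_flatten_map (T : Type) (U : eqType) (A : T -> seq U) (cs : seq T) y :
  y \in flatten (map A cs) <-> exists c, List.In c cs /\ y \in A c.
Proof.
elim: cs => [|c cs IH] /=; first by split => [|[c []]]; rewrite ?in_nil.
rewrite mem_cat; split.
- case/orP => [H|/IH [c' [H1 H2]]]; [by exists c; split; [left|] | by exists c'; split; [right|]].
- case=> c' [[<-|H1] H2]; first by rewrite H2.
  apply/orP; right; apply/IH; by exists c'.
Qed.

Lemma In_in (T : eqType) (x : T) s : List.In x s -> x \in s.
Proof. elim: s => //= y s IH [->|/IH]; rewrite inE ?eqxx // => ->; by rewrite orbT. Qed.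

Lemma ForallIn (T : Type) (P : T -> Prop) l x : List.Forall P l -> List.In x l -> P x.
Proof. move=> H; exact: (proj1 (List.Forall_forall P l) H x). Qed.

Lemma In_flatten_map (T U : Type) (f : T -> seq U) cs z :
  List.In z (flatten (map f cs)) -> exists c, List.In c cs /\ List.In z (f c).
Proof.
elim: cs => [|c cs IH] //= H; case: (List.in_app_or _ _ _ H) => [H0|/IH [c' [H1 H2]]].
- by exists c; split; [left|].
- by exists c'; split; [right|].
Qed.

Lemma prefix_rcons_inv (p y : pos) i : prefix p (rcons y i) -> p = rcons y i \/ prefix p y.
Proof.
rewrite !prefixE => /eqP E; case: (leqP (size p) (size y)) => H.
- right; apply/eqP; by rewrite -[RHS]E -cats1 takel_cat.
- left; by rewrite -[LHS]E take_oversize // size_rcons.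
Qed.

Section Trees.
Variables (F : finType) (V : countType) (arity : F -> nat).
Variables (lab : state F V -> pos) (R : {fset rule F V}).
Notation term := (term F V).
Notation goal := (goal F V).
Notation state := (state F V).
Notation redex := (redex F V).
Notation ctree := (ctree F V).
Notation deriv := (deriv arity lab R).
Notation delta := (delta arity lab R).
Notation matches := (matches arity lab R).
Notation GS := (GS R).
Notation SI := (SI R).
Notation Inv := (@Inv F V).
Notation reachable := (reachable arity lab R).
Notation covers := (@covers F V).

Definition ctree_ind' (P : ctree -> Prop) (HB : forall s q, P (Bud s q))
  (HN : forall s q cs, List.Forall P cs -> P (Node s q cs)) : forall c, P c :=
  fix IH c := match c with
  | Bud s q => HB s q
  | Node s q cs => HN s q cs ((fix G (l : seq ctree) : List.Forall P l :=
      match l with [::] => List.Forall_nil P | u :: l' => List.Forall_cons u (IH u) (G l') end) cs)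
  end.

Definition croot (c : ctree) : state * pos :=
  match c with Bud s q => (s, q) | Node s q _ => (s, q) end.

Inductive Good (t : term) : seq pos -> ctree -> Prop :=
| GBud A s q : reachable s -> Inv t A s q -> Good t A (Bud s q)
| GNode A s q cs f args : reachable s -> Inv t A s q ->
    subterm t (q ++ lab s) = Some (App f args) ->
    (forall c, List.In c cs -> exists2 y, y \in delta s f & croot c = (y.1, q ++ y.2)) ->
    (forall y, y \in delta s f -> exists c, List.In c cs /\ croot c = (y.1, q ++ y.2)) ->
    (forall c, List.In c cs -> Good t (rcons A (q ++ lab s)) c) ->
    Good t A (Node s q cs).

Inductive NodeAt : seq pos -> ctree -> seq pos -> state -> pos -> Prop :=
| NA_here A s q cs : NodeAt A (Node s q cs) A s q
| NA_child A s q cs c A' s' q' : List.In c cs -> NodeAt (rcons A (q ++ lab s)) c A' s' q' ->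
    NodeAt A (Node s q cs) A' s' q'.

Lemma root_grow s p f c : croot (grow arity lab R s p f c) = croot c.
Proof. case: c => [s' p'|s' p' cs] //=; case: ifP => // /andP[/eqP-> /eqP->] //. Qed.

Lemma root_prune p c : croot (prune lab p c) = croot c.
Proof. case: c => [s' p'|s' p' cs] //=; by case: ifP. Qed.

Lemma inv_GNode t A s q cs : Good t A (Node s q cs) ->
  exists f args, [/\ reachable s, Inv t A s q, subterm t (q ++ lab s) = Some (App f args),
    (forall c, List.In c cs -> exists2 y, y \in delta s f & croot c = (y.1, q ++ y.2)) /\
    (forall y, y \in delta s f -> exists c, List.In c cs /\ croot c = (y.1, q ++ y.2)) &
    (forall c, List.In c cs -> Good t (rcons A (q ++ lab s)) c)].
Proof.
move=> HG; inversion HG as [|A0 s0 q0 cs0 f args Hr HI Hs H1 H2 H3]; subst.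
by exists f, args; split.
Qed.

Lemma NodeAt_Good t A c A' s q : Good t A c -> NodeAt A c A' s q ->
  [/\ reachable s, Inv t A' s q & exists f args, subterm t (q ++ lab s) = Some (App f args)].
Proof.
move=> HG HN; elim: HN HG => [A0 s0 q0 cs|A0 s0 q0 cs c0 A1 s1 q1 Hin HN IH] HG;
  have [f [args [Hr HI Hs [H1 H2] H3]]] := inv_GNode HG.
- by split => //; exists f, args.
- exact: IH (H3 _ Hin).
Qed.

Lemma Good_bud_reach t A c y : Good t A c -> y \in buds_seq c -> reachable y.1.
Proof.
elim=> [A' s q Hr _|A' s q cs f args _ _ _ _ _ _ IH] /=; first by rewrite inE => /eqP ->.
case/in_flatten_map => c0 [H1 H2]; exact: IH H2.
Qed.


Lemma buds_grow1 s p f c y : y \in buds_seq c -> y != (s, p) ->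
  y \in buds_seq (grow arity lab R s p f c).
Proof.
elim/ctree_ind': c => [s' p'|s' p' cs IH] /=.
- rewrite inE => /eqP -> Hn; case: ifP => [/andP[/eqP E1 /eqP E2]|_]; last by rewrite inE.
  by move: Hn; rewrite E1 E2 eqxx.
- case/in_flatten_map => c [Hin Hy] Hn; apply/in_flatten_map; exists (grow arity lab R s p f c).
  split; first exact: List.in_map.
  exact: (ForallIn IH Hin Hy Hn).
Qed.

Lemma buds_grow2 s p f c z : (s, p) \in buds_seq c -> z \in delta s f ->
  (z.1, p ++ z.2) \in buds_seq (grow arity lab R s p f c).
Proof.
elim/ctree_ind': c => [s' p'|s' p' cs IH] /=.
- rewrite inE => /eqP [<- <-] zin; rewrite !eqxx /=.
  apply/in_flatten_map; exists (Bud z.1 (p ++ z.2)); split; last by rewrite inE.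
  apply/List.in_map_iff; exists z; split => //; exact: in_In.
- case/in_flatten_map => c [Hin Hy] zin; apply/in_flatten_map; exists (grow arity lab R s p f c).
  split; first exact: List.in_map.
  exact: (ForallIn IH Hin Hy zin).
Qed.

Lemma Good_grow t A c s p f args : is_trs arity R -> Good t A c ->
  subterm t (p ++ lab s) = Some (App f args) -> Good t A (grow arity lab R s p f c).
Proof.
move=> Htrs; elim => [A0 s' q' Hr HI|A0 s' q' cs f' args' Hr HI Hs H1 H2 H3 IH] Hsub /=.
- case: ifP => [/andP[/eqP E1 /eqP E2]|_]; last exact: GBud.
  subst s' q'; apply: (GNode (f := f) (args := args)) => //.
  + move=> c1 /List.in_map_iff [z [<- /In_in zin]]; by exists z.
  + move=> y yin; exists (Bud y.1 (p ++ y.2)); split => //.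
    apply/List.in_map_iff; exists y; split => //; exact: in_In.
  + move=> c1 /List.in_map_iff [z [<- /In_in zin]]; apply: GBud.
    * apply: (@reachS _ _ _ _ _ s f z.1 z.2 Hr); by rewrite -surjective_pairing.
    * exact: (delta_Inv Htrs (reach_SI Htrs Hr) HI Hsub zin).
- apply: (GNode (f := f') (args := args')) => //.
  + move=> c1 /List.in_map_iff [c0 [<- Hin]]; rewrite root_grow; exact: H1.
  + move=> y /H2 [c0 [Hin Hr0]]; exists (grow arity lab R s p f c0); split; last by rewrite root_grow.
    exact: List.in_map.
  + move=> c1 /List.in_map_iff [c0 [<- Hin]]; exact: IH.
Qed.


Lemma inv_NodeAt A s q cs A' s' q' : NodeAt A (Node s q cs) A' s' q' ->
  (A' = A /\ s' = s /\ q' = q) \/ exists c, List.In c cs /\ NodeAt (rcons A (q ++ lab s)) c A' s' q'.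
Proof. move=> H; inversion H; subst; [by left | right; by eexists; split; eauto]. Qed.

Lemma NodeAt_bud A s q A' s' q' : NodeAt A (Bud s q) A' s' q' -> False.
Proof. by move=> H; inversion H. Qed.

Lemma complete t A c rd : is_trs arity R -> wf arity t -> is_redex R t rd -> Good t A c ->
  covers (croot c) rd ->
  (exists A' s q, NodeAt A c A' s q /\ rd \in matches s q t) \/ exists2 y, y \in buds_seq c & covers y rd.
Proof.
move=> Htrs Wt Hred; elim => [A0 s q Hr HI|A0 s q cs f args Hr HI Hs H1 H2 H3 IH] /= Hcov.
- by right; exists (s, q); rewrite ?inE.
- case: (local_complete Htrs (reach_SI Htrs Hr) Wt Hred Hcov Hs) => [Hm|[h hin hg]].
    by left; exists A0, s, q; split => //; apply: NA_here.
  have [y yin ycov] := child_cov Htrs (reach_SI Htrs Hr) hin hg.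
  have [c0 [Hin Hroot]] := H2 y yin.
  case: (IH c0 Hin); first by rewrite Hroot.
  + case=> A' [s' [q' [HN Hm]]]; left; exists A', s', q'; split => //; exact: NA_child HN.
  + case=> y' y'in y'cov; right; exists y' => //; apply/in_flatten_map; by exists c0.
Qed.

Lemma label_ex s : label_ok arity lab R -> reachable s -> exists2 g, g \in s & lab s \in posm g.1.
Proof. by move=> Hl /Hl [g gin /andP[_ H]]; exists g. Qed.

Lemma chain t A c y rd : label_ok arity lab R -> is_trs arity R -> Good t A c ->
  (y \in buds_seq c \/ y \in nodes_seq c) -> covers y rd -> covers (croot c) rd.
Proof.
move=> Hlab Htrs; elim => [A0 s q Hr HI|A0 s q cs f args Hr HI Hs H1 H2 H3 IH] /=.
- by rewrite inE in_nil => -[/eqP ->|].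
- move=> Hy Hc.
  have [Ey|[c0 [Hin Hy0]]] : y = (s, q) \/ exists c0, List.In c0 cs /\ (y \in buds_seq c0 \/ y \in nodes_seq c0).
    case: Hy => [H|]; first by case/in_flatten_map: H => c0 [K1 K2]; right; exists c0; split => //; left.
    rewrite inE => /orP[/eqP ->|H]; first by left.
    by case/in_flatten_map: H => c0 [K1 K2]; right; exists c0; split => //; right.
  by rewrite -Ey.
  have := IH c0 Hin Hy0 Hc; have [z zin ->] := H1 c0 Hin => Hc0.
  have [h hin hg] := unchild_cov Htrs (reach_SI Htrs Hr) zin Hc0.
  exact: deriv_cov_parent (label_ex Hlab Hr) hin hg.
Qed.

Lemma subtrees_nodes p c Z y : List.In Z (subtrees_at lab p c) -> y \in nodes_seq Z -> y \in nodes_seq c.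
Proof.
elim/ctree_ind': c => [s q|s q cs IH] /=.
- by case: ifP => // _ [<-|].
- move=> H; case: (List.in_app_or _ _ _ H) => [|H0].
    by case: ifP => // _ [<-|].
  case: (In_flatten_map H0) => c0 [Hin HZ] Hy.
  rewrite inE; apply/orP; right; apply/in_flatten_map; exists c0; split => //.
  exact: (ForallIn IH Hin HZ Hy).
Qed.

Lemma prune_cover t A c p y rd : label_ok arity lab R -> is_trs arity R -> Good t A c ->
  (y \in buds_seq c \/ exists Z, List.In Z (subtrees_at lab p c) /\ y \in nodes_seq Z) ->
  covers y rd -> exists2 y', y' \in buds_seq (prune lab p c) & covers y' rd.
Proof.
move=> Hlab Htrs HG; elim: HG y => [A0 s q Hr HI|A0 s q cs f args Hr HI Hs H1 H2 H3 IH] y.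
- case=> [Hy|[Z [HZ Hy]]] Hc; first by exists y.
  by move: HZ; rewrite /=; case: ifP => // _ [HZ|//]; subst Z.
- move=> Hy Hc.
  have HG : Good t A0 (Node s q cs) by exact: GNode Hr HI Hs H1 H2 H3.
  have Hy' : y \in buds_seq (Node s q cs) \/ y \in nodes_seq (Node s q cs).
    case: Hy => [Hy|[Z [HZ Hy]]]; first by left.
    right; exact: subtrees_nodes HZ Hy.
  rewrite /=; case: ifP => Hp.
  + exists (s, q); first by rewrite inE.
    exact: (chain Hlab Htrs HG Hy' Hc).
  + case: Hy => [/in_flatten_map [c0 [Hin Hy]]|[Z [HZ Hy]]].
    * have [y' y'in y'c] := IH c0 Hin y (or_introl Hy) Hc; exists y' => //.
      apply/in_flatten_map; exists (prune lab p c0); split => //; exact: List.in_map.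
    * move: HZ; rewrite /= Hp /= => HZ; case: (In_flatten_map HZ) => c0 [Hin HZ0].
      have [y' y'in y'c] := IH c0 Hin y (or_intror (ex_intro _ Z (conj HZ0 Hy))) Hc; exists y' => //.
      apply/in_flatten_map; exists (prune lab p c0); split => //; exact: List.in_map.
Qed.


Lemma Inv_replace t A s q p u : Inv t A s q -> (forall y, y \in A -> ~~ prefix p y) ->
  subterm t p <> None -> Inv (replace t p u) A s q.
Proof.
move=> HI HA Hp g gin; have [D1 D2] := HI g gin; split => // c u' Hc Hu.
case: (D2 c u' Hc Hu) => [[H1 H2]|H]; last by right.
left; split => //; rewrite replace_head //; exact: HA.
Qed.

Lemma pos_not_prefix t A s q p : label_ok arity lab R -> reachable s -> Inv t A s q ->
  (forall y, y \in A -> ~~ prefix p y) -> q ++ lab s != p -> ~~ prefix p (q ++ lab s).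
Proof.
move=> Hlab Hr HI HA Hne; have [g gin /in_posm [u uin]] := label_ex Hlab Hr.
have [D1 _] := HI g gin.
case: (D1 _ uin) => /= [E|[y [i [E yA]]]]; rewrite E.
- rewrite prefixs0; apply: contra Hne => /eqP ->; by rewrite E.
- apply/negP => /prefix_rcons_inv [Ep|Hp].
  + by move: Hne; rewrite E Ep eqxx.
  + by move: (HA y yA); rewrite Hp.
Qed.

Lemma prune_good t A c p u : label_ok arity lab R -> Good t A c ->
  (forall y, y \in A -> ~~ prefix p y) -> subterm t p <> None ->
  Good (replace t p u) A (prune lab p c).
Proof.
move=> Hlab; elim => [A0 s q Hr HI|A0 s q cs f args Hr HI Hs H1 H2 H3 IH] HA Hp /=.
- apply: GBud => //; exact: Inv_replace.
- case: ifP => Hx; first by apply: GBud => //; exact: Inv_replace.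
  have Hnp := pos_not_prefix Hlab Hr HI HA (negbT Hx).
  have Hh : headAt (replace t p u) (q ++ lab s) = Some f by rewrite replace_head // /headAt Hs.
  move: Hh; rewrite /headAt; case Hs' : subterm => [[x|f' args']|] //= [Ef]; subst f'.
  apply: (GNode (f := f) (args := args')) => //.
  + exact: Inv_replace.
  + move=> c1 /List.in_map_iff [c0 [<- Hin]]; rewrite root_prune; exact: H1.
  + move=> y /H2 [c0 [Hin Hr0]]; exists (prune lab p c0); split; last by rewrite root_prune.
    exact: List.in_map.
  + move=> c1 /List.in_map_iff [c0 [<- Hin]]; apply: IH => // z.
    rewrite mem_rcons inE => /orP[/eqP ->//|]; exact: HA.
Qed.

Lemma prune_node t A c p A' s q : label_ok arity lab R -> Good t A c ->
  (forall y, y \in A -> ~~ prefix p y) -> NodeAt A (prune lab p c) A' s q ->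
  NodeAt A c A' s q /\ ~~ prefix p (q ++ lab s).
Proof.
move=> Hlab HG; elim: HG A' s q => [A0 s0 q0 Hr HI|A0 s0 q0 cs f args Hr HI Hs H1 H2 H3 IH] A' s q HA /=.
- by move/NodeAt_bud.
- case: ifP => Hx; first by move/NodeAt_bud.
  have Hnp := pos_not_prefix Hlab Hr HI HA (negbT Hx).
  case/inv_NodeAt => [[-> [-> ->]]|[c1 [/List.in_map_iff [c0 [<- Hin]] HN]]].
  + split => //; exact: NA_here.
  + have HA' : forall z, z \in rcons A0 (q0 ++ lab s0) -> ~~ prefix p z.
      move=> z; rewrite mem_rcons inE => /orP[/eqP ->//|]; exact: HA.
    have [HN' Hp'] := IH c0 Hin A' s q HA' HN.
    split => //; exact: NA_child HN'.
Qed.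

End Trees.

Section Main.
Variables (F : finType) (V : countType) (arity : F -> nat).
Variables (lab : state F V -> pos) (R : {fset rule F V}).
Variable select : ctree F V -> {fset redex F V} -> option (action F V).
Notation term := (term F V).
Notation state := (state F V).
Notation redex := (redex F V).
Notation ctree := (ctree F V).
Notation matches := (matches arity lab R).
Notation Good := (Good arity lab R).
Notation covers := (@covers F V).

Hypothesis Htrs : is_trs arity R.
Hypothesis Hll : left_linear R.
Hypothesis Hlab : label_ok arity lab R.
Hypothesis Hsel : is_strategy select.

Definition INV (m : mstate F V) : Prop :=
  let: (t, reds, c) := m in
  [/\ Good t [::] c, croot c = (s0 R, [::]), wf arity t, (forall rd, rd \in reds -> rd.1 \in R) &
      forall rd, is_redex R t rd -> rd \in reds \/ exists2 y, y \in buds_seq c & covers y rd].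

Lemma matches_eq s q t t' : headAt t' (q ++ lab s) = headAt t (q ++ lab s) ->
  matches s q t' = matches s q t.
Proof. by rewrite /matches /headAt => ->. Qed.

Lemma matches_R s q t rd : rd \in matches s q t -> rd.1 \in R.
Proof. by case/in_matches => f [_ [[rl a] /in_out [rin _] ->]]. Qed.

Lemma step m m' : nstep arity lab R select m m' -> INV m ->
  INV m' /\ clos_refl_trans term (rstep R) m.1.1 m'.1.1.
Proof.
case=> [t reds c s p f args _ Hs Hsub|t reds c l r p sigma _ Hs Hsub] [HG Hroot Wt HR HI].
- have spin : (s, p) \in buds_seq c.
    by have := (Hsel.1 _ _ _ Hs); rewrite /act_in /buds in_fset_seq.
  split; last exact: rt_refl.
  split => //.
  + exact: Good_grow Htrs HG Hsub.
  + by rewrite root_grow.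
  + move=> rd; rewrite in_fsetU => /orP[|]; [exact: HR | exact: matches_R].
  + move=> rd Hred; case: (HI rd Hred) => [Hin|[y yin Hc]].
      by left; rewrite in_fsetU Hin.
    case: (eqVneq y (s, p)) => Ey; last first.
      by right; exists y => //; exact: buds_grow1.
    subst y; have Hr := Good_bud_reach HG yin.
    case: (local_complete Htrs (reach_SI Htrs Hr) Wt Hred Hc Hsub) => [Hm|[h hin hg]].
      by left; rewrite in_fsetU Hm orbT.
    have [z zin zc] := child_cov Htrs (reach_SI Htrs Hr) hin hg.
    right; exists (z.1, p ++ z.2) => //; exact: buds_grow2.
- have rdin : ((l, r), p) \in reds by exact: (Hsel.1 _ _ _ Hs).
  have rin : (l, r) \in R := HR _ rdin.
  have Hp : subterm t p <> None by rewrite Hsub.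
  set t' := replace t p (subst sigma r).
  split; last first.
    apply: rt_step; exists (l, r), p, sigma; split => //.
  have [_ Wl Wr Hvars] := Htrs.2 _ rin.
  have Wt' : wf arity t'.
    apply: wf_replace => //; apply: wf_subst => // x /Hvars xin.
    exact: (wf_subst_inv (subterm_wf Wt Hsub) xin).
  have HA0 : forall y, y \in ([::] : seq pos) -> ~~ prefix p y by [].
  have HG' : Good t' [::] (prune lab p c) by exact: prune_good Hlab HG HA0 Hp.
  split => //.
  + by rewrite root_prune.
  + by move=> rd; rewrite in_fsetD => /andP[_ /HR].
  move=> rd Hred.
  have rdR : rd.1 \in R := Hred.1.
  have Hcov : covers (croot (prune lab p c)) rd by rewrite root_prune Hroot; exact: root_covers.
  case: (complete Htrs Wt' Hred HG' Hcov) => [[A' [s [q [HN Hm]]]]|]; last by right.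
  have [HN0 Hnp] := prune_node Hlab HG HA0 HN.
  have [Hr HIv _] := NodeAt_Good HG HN0.
  rewrite (matches_eq (t := t)) in Hm; last by rewrite replace_head.
  have [_ Hheads] := sound Htrs (reach_SI Htrs Hr) HIv Hm.
  have Hred0 : is_redex R t rd.
    apply: (redex_of_heads Htrs Hll Wt rdR) => c' u Hc Hu; exact: (Hheads c' u Hc Hu).2.
  case: (HI rd Hred0) => [Hin|[y yin Hc]].
  + case: (boolP (rd \in \bigcup_(x <- enum_fset (nodes_at lab p c)) matches x.1 x.2 t)) => Hrem.
    * case/bigfcupP: Hrem => x /andP[xin _] Hmx.
      move: xin; rewrite /nodes_at in_fset_seq => /in_flatten_map [Z [HZ Hx]].
      have Hcx : covers (x.1, x.2) rd by exact: matches_covers Hmx.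
      right; apply: (prune_cover Hlab Htrs HG _ Hcx); right; exists Z; split => //.
      by rewrite -surjective_pairing.
    * by left; rewrite in_fsetD Hin Hrem.
  + right; exact: (prune_cover Hlab Htrs HG (or_introl yin) Hc).
Qed.

End Main.

Theorem corollary1 (F : finType) (V : countType) (arity : F -> nat)
    (R : {fset rule F V}) (lab : state F V -> pos)
    (select : ctree F V -> {fset redex F V} -> option (action F V))
    (t0 t : term F V) :
  is_trs arity R ->
  left_linear R ->
  label_ok arity lab R ->
  wf arity t0 -> ground t0 ->
  is_strategy select ->
  normalize_returns arity lab R select t0 t ->
  clos_refl_trans (term F V) (rstep R) t0 t /\ normal_form R t.
Proof.
move=> Htrs Hll Hlab Wt0 _ Hsel [reds [c [Hrt Hbuds Hreds]]].
have Hrun : forall m m', clos_refl_trans_1n _ (nstep arity lab R select) m m' ->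
    INV arity lab R m -> INV arity lab R m' /\ clos_refl_trans _ (rstep R) m.1.1 m'.1.1.
  move=> m m'; elim => [m0|m0 m1 m2 Hs _ IH] Hinv; first by split => //; exact: rt_refl.
  have [I1 R1] := step Htrs Hll Hlab Hsel Hs Hinv; have [I2 R2] := IH I1.
  split => //; exact: rt_trans R1 R2.
have Hinit : INV arity lab R (t0, fset0, Bud (s0 R) [::]).
  split => //.
  - apply: GBud; first exact: reach0.
    move=> g /imfsetP [l lin ->]; split.
    + move=> x /in_fresh1 -> /=; by left.
    + move=> c' u _ _; right; exists [::], c'; split => //; by rewrite posm_fresh.
  - move=> rd Hred; right; exists (s0 R, [::]); first by rewrite inE.
    exact: root_covers Hred.1.
have [[HG Hroot Wt HR HI] Hrt'] := Hrun _ _ (clos_rt_rt1n _ _ _ _ Hrt) Hinit.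
split => // rd Hred; case: (HI rd Hred) => [|[y yin _]]; first by rewrite Hreds in_fset0.
have : y \in buds c by rewrite /buds in_fset_seq.
by rewrite Hbuds in_fset0.
Qed.
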